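(* Let $(X,\wedge,\vee,\bot,\top)$ be a bounded distributive lattice, let $n\ge 1$, and let $x=(x_1,\ldots,x_n)$ be a sequence of elements of $X$ such that $x_i\le x_n$ for all $1\le i\le n-1$. For $0\le m\le n$ and $0\le k\le m+1$ define $$P_m(k)=\begin{cases}\bot & k=0,\\ \bigwedge_{I\subseteq\{1,\ldots,m\},\ |I|=k}\ \bigvee_{i\in I} x_i & 1\le k\le m,\\ \top & k=m+1.\end{cases}$$ Then $P_n(n)=x_n$, and $P_n(i)=P_{n-1}(i)$ for all $1\le i\le n-1$.
   Context: $\le$ is the partial order of the lattice $X$; $\bot$ and $\top$ are its least and greatest elements. For $1\le k\le m$, $P_m(k)$ is the $k$-th element of $(x_1,\ldots,x_m)$ sorted with respect to the lattice. *)

(* Defs.v *)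
From HB Require Import structures.
From mathcomp Require Import all_boot all_order.
Set Implicit Arguments. Unset Strict Implicit. Unset Printing Implicit Defensive.
Import Order.TTheory.
Local Open Scope order_scope.

(* x : nat -> L is 1-indexed: the sequence (x_1,...,x_n) is x 1, ..., x n.
   Subsets I of {1..m} are represented by sets of 'I_m, element i : 'I_m
   standing for index i+1. *)
Definition P {disp : Order.disp_t} {L : tbDistrLatticeType disp}
  (x : nat -> L) (m k : nat) : L :=
  if k == 0%N then \bot
  else if (k <= m)%N then
    \meet_(I : {set 'I_m} | #|I| == k) \join_(i in I) x i.+1
  else \top.

(* Main.v *)
Require Import Defs.
From HB Require Import structures.
From mathcomp Require Import all_boot all_order.
Import Order.TTheory.
Local Open Scope order_scope.

Theorem lemma3p3 (disp : Order.disp_t) (L : tbDistrLatticeType disp)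
  (n : nat) (x : nat -> L) :
  (1 <= n)%N ->
  (forall i : nat, (1 <= i)%N -> (i <= n.-1)%N -> x i <= x n) ->
  P x n n = x n /\
  (forall i : nat, (1 <= i)%N -> (i <= n.-1)%N -> P x n i = P x n.-1 i).
Proof.
case: n => [//|m] _ /= Hx.
have Hall : \join_(j in [set: 'I_m.+1]) x j.+1 = x m.+1.
  apply/le_anti/andP; split.
    apply/joinsP => j _; have := ltn_ord j; rewrite ltnS leq_eqVlt.
    case/orP => [/eqP -> // | Hj]; exact: Hx.
  by apply: (@joins_sup _ _ _ (@ord_max m) (fun j => j \in [set: 'I_m.+1]) (fun j : 'I_m.+1 => x j.+1)); rewrite inE.
split.
  rewrite /P /= leqnn; apply/le_anti/andP; split.
    rewrite -Hall; apply: (@meets_inf _ _ _ setT (fun I : {set 'I_m.+1} => #|I| == m.+1)).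
    by rewrite cardsT card_ord.
  apply/meetsP => I /eqP HI.
  have -> : I = setT.
    apply/eqP; rewrite eqEcard subsetT /=. rewrite cardsT card_ord HI leqnn. done.
  by rewrite Hall.
move=> i Hi1 Him.
have Hi0 : (i == 0%N) = false by case: i Hi1 {Him}.
rewrite /P Hi0 Him (leq_trans Him (leqnSn m)).
set f := lift (@ord_max m).
have fv : forall j : 'I_m, f j = j :> nat by move=> j; rewrite /f lift_max.
have finj : injective f := @lift_inj _ ord_max.
have joinf : forall J : {set 'I_m},
    \join_(j in f @: J) x j.+1 = \join_(j in J) x j.+1.
  move=> J; rewrite big_imset /=; last by move=> a b _ _; apply: finj.
  by apply: eq_bigr => j _; rewrite /bump leqNgt ltn_ord.
apply/le_anti/andP; split.
  apply/meetsP => J /eqP HJ; rewrite -joinf.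
  apply: (@meets_inf _ _ _ (f @: J) (fun I : {set 'I_m.+1} => #|I| == i)).
  by rewrite card_imset // HJ.
apply/meetsP => I /eqP HI.
case: (boolP (ord_max \in I)) => Hmax.
  pose J := widen_ord Him @: [set: 'I_i].
  have cJ : #|J| = i.
    by rewrite card_imset ?cardsT ?card_ord //; by move=> a b /(congr1 val) /= ?; apply: val_inj.
  apply: le_trans (@meets_inf _ _ _ J (fun J : {set 'I_m} => #|J| == i) _ _) _.
    by rewrite cJ.
  apply: le_trans (_ : x m.+1 <= _).
    apply/joinsP => j _; apply: Hx => //; exact: ltn_ord.
  exact: (@joins_sup _ _ _ (@ord_max m) (fun j => j \in I) (fun j : 'I_m.+1 => x j.+1)).
pose J := [set j : 'I_m | f j \in I].
have EI : I = f @: J.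
  apply/setP => k; case: (unliftP ord_max k) => [j -> | ->].
    by rewrite (mem_imset _ _ finj) inE.
  rewrite (negbTE Hmax); apply/esym/negbTE/imsetP => -[j _ /(congr1 val)].
  rewrite /= /bump leqNgt ltn_ord add0n => E.
  by have := ltn_ord j; rewrite -E ltnn.
have cJ : #|J| = i by rewrite -HI EI card_imset.
rewrite EI joinf.
by apply: (@meets_inf _ _ _ J (fun J : {set 'I_m} => #|J| == i)); rewrite cJ.
Qed.
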